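(* Let $(X,\tau)$ be a $T_1$ topological space. Then $X$ is a D-space if and only if for every continuous map $f:(X,\tau)\to(\mathcal P(X),\tau_{\mathcal S(X)})$ with $x\in f(x)$ for all $x\in X$, there exist a continuous neighborhood refinement map $f_*$ of $f$ and a set $D\subseteq X$ such that the map $g:(X,\tau)\to(\mathcal P(D),\tau_{\mathcal S(D)})$, $g(x)=f_*(x)\cap D$, is continuous, satisfies $g^{-1}(\{\emptyset\})=\emptyset$, and satisfies $g(d)=\{d\}$ for all $d\in D$.
   Context: For a set $A$ and $a\in A$, let $\mathcal U_A(a)=\{B\subseteq A: a\in B\}$. The principal ultrafilter topology $\tau_{\mathcal S(A)}$ on $\mathcal P(A)$ is the topology generated by the subbase $\{\mathcal U_A(a): a\in A\}$. Given a continuous map $f:(X,\tau)\to(\mathcal P(X),\tau_{\mathcal S(X)})$ with $x\in f(x)$ for all $x$, a continuous neighborhood refinement map of $f$ is a continuous map $f_*:(X,\tau)\to(\mathcal P(X),\tau_{\mathcal S(X)})$ with $x\in f_*(x)\subseteq f(x)$ for all $x$. An open neighborhood assignment is a function $N:X\to\tau$ with $x\in N(x)$ for all $x$. $X$ is a D-space if for every open neighborhood assignment $N$ there is a closed discrete $D\subseteq X$ with $\bigcup_{d\in D}N(d)=X$. *)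

(* Defs.v *)
From HB Require Import structures.
From mathcomp Require Import all_boot all_order.
From mathcomp Require Import all_classical topology.
From mathcomp Require Import topology.
Set Implicit Arguments. Unset Strict Implicit. Unset Printing Implicit Defensive.
Local Open Scope classical_set_scope.

Definition is_topology (T : Type) (O : set (set T)) : Prop :=
  [/\ O setT,
      (forall U V, O U -> O V -> O (U `&` V)) &
      (forall F : set (set T), F `<=` O -> O (\bigcup_(U in F) U))].

Definition generated_open (T : Type) (S : set (set T)) : set (set T) :=
  fun W => forall O : set (set T), is_topology O -> S `<=` O -> O W.

Definition U_ (A : Type) (a : A) : set (set A) := [set B | B a].

(* open sets of the principal ultrafilter topology tau_{S(A)} on P(A) *)
Definition pu_open (A : Type) : set (set (set A)) :=
  generated_open [set U_ a | a in [set: A]].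

Definition continuous_PA (X : topologicalType) (A : Type) (f : X -> set A) : Prop :=
  forall W, pu_open W -> open (f @^-1` W).

Definition cont_nbhd_refinement (X : topologicalType) (f fs : X -> set X) : Prop :=
  continuous_PA fs /\ (forall x, fs x x /\ fs x `<=` f x).

Definition open_nbhd_assignment (X : topologicalType) (N : X -> set X) : Prop :=
  forall x, open (N x) /\ N x x.

Definition closed_discrete (X : topologicalType) (D : set X) : Prop :=
  closed D /\
  (forall d, D d -> exists U : set X, [/\ open U, U d & U `&` D = [set d]]).

Definition D_space (X : topologicalType) : Prop :=
  forall N : X -> set X, open_nbhd_assignment N ->
    exists D : set X, closed_discrete D /\ \bigcup_(d in D) N d = setT.

(* g(x) = fs(x) ∩ D, as an element of P(D) *)
Definition trace_map (X : topologicalType) (fs : X -> set X) (D : set X)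
  : X -> set {x : X | D x} :=
  fun x => [set d : {x : X | D x} | fs x (proj1_sig d)].
Arguments trace_map [X] fs D _ _.

(* Main.v *)
Require Import Defs.
From HB Require Import structures.
From mathcomp Require Import all_boot all_order.
From mathcomp Require Import all_classical topology.
From mathcomp Require Import topology.
Local Open Scope classical_set_scope.

Lemma contPA (X : topologicalType) (A : Type) (f : X -> set A) :
  continuous_PA f <-> forall a, open [set x | f x a].
Proof.
split.
  move=> H a; apply: (H (U_ a)) => O _; apply; exists a => //.
move=> H W HW; apply: (HW [set W | open (f @^-1` W)]).
  split => /=.
  - rewrite preimage_setT; exact: openT.
  - by move=> U V HU HV; rewrite preimage_setI; apply: openI.
  - by move=> F FO; rewrite preimage_bigcup; apply: bigcup_open => i Fi; apply: FO.
by move=> W' [a _ <-]; exact: (H a).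
Qed.

Arguments contPA {X A f}.

Lemma trace_ne (X : topologicalType) (fs : X -> set X) (D : set X) y :
  (trace_map fs D) @^-1` [set set0] = set0 ->
  exists e : sig D, fs y (proj1_sig e).
Proof.
move=> gne.
have : trace_map fs D y != set0.
  apply/eqP => E.
  have : (trace_map fs D @^-1` [set set0]) y by [].
  by rewrite gne.
by move/set0P => [e He]; exists e.
Qed.

Arguments trace_ne {X fs D} y.

Lemma trace_single (X : topologicalType) (fs : X -> set X) (D : set X) y d :
  (forall d : sig D, trace_map fs D (proj1_sig d) = [set d]) ->
  D y -> D d -> fs y d -> y = d.
Proof.
move=> gd Dy Dd fyd.
have := gd (exist D y Dy) => /= E.
have : trace_map fs D y (exist D d Dd) by [].
by rewrite E => /(congr1 (@proj1_sig _ _)) /= ->.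
Qed.

Arguments trace_single {X fs D y d}.

Theorem mainTheorem2 (X : topologicalType) (hT1 : accessible_space X) :
  D_space X <->
  (forall f : X -> set X, continuous_PA f -> (forall x, f x x) ->
     exists (fs : X -> set X) (D : set X),
       [/\ cont_nbhd_refinement f fs,
           continuous_PA (trace_map fs D),
           (trace_map fs D) @^-1` [set set0] = set0 &
           (forall d : sig D, trace_map fs D (proj1_sig d) = [set d])]).
Proof.
split.
- move=> HD f fc fx.
  have Nop := contPA.1 fc.
  have [D [[Dcl Ddisc] Dcov]] :=
    HD (fun a => [set y | f y a]) (fun x => conj (Nop x) (fx x)).
  have : forall d, exists U : set X,
      [/\ open U, U d & (D d -> U `&` D = [set d])].
    move=> d; case: (pselect (D d)) => Dd.
      have [U [oU Ud UD]] := Ddisc d Dd.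
      by exists U; split.
    by exists setT; split => //; exact: openT.
  move=> /choice [U HU].
  pose fs := fun x => [set a | f x a /\ (~ D x \/ U a x)].
  have fsop : forall a, open [set x | fs x a].
    move=> a.
    have -> : [set x | fs x a] = [set x | f x a] `&` (~` D `|` U a) by [].
    apply: openI; first exact: Nop.
    apply: openU; first exact: closed_openC.
    by have [] := HU a.
  have fsxx : forall x, fs x x.
    move=> x; split; first exact: fx.
    case: (pselect (D x)) => Dx; [right | by left].
    by have [] := HU x.
  exists fs, D; split.
  + split; first exact/contPA.
    by move=> x; split => //; move=> a [].
  + apply/contPA => a; exact: (fsop (proj1_sig a)).
  + apply/seteqP; split => // x /= Hx.
    have : setT x by [].
    rewrite -Dcov => -[d Dd Nx].
    case: (pselect (D x)) => Dx.
      have : trace_map fs D x (exist D x Dx) by exact: fsxx.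
      by rewrite Hx.
    have : trace_map fs D x (exist D d Dd) by split => //; left.
    by rewrite Hx.
  + move=> [d Dd] /=; apply/seteqP; split => [[e De] /= [fde [//|Ued]]|e /= ->].
      have [_ _ /(_ De) UD] := HU e.
      have : (U e `&` D) d by [].
      rewrite UD /= => ede; subst e.
      by rewrite (Prop_irrelevance De Dd).
    exact: fsxx.
- move=> H N HN.
  have fc : continuous_PA (fun x => [set a | N a x]).
    by apply/contPA => a; have [] := HN a.
  have [fs [D [[fsc fsr] gc gne gd]]] := H _ fc (fun x => (HN x).2).
  have fsop := contPA.1 fsc.
  exists D; split; [split|].
  + rewrite -[D]setCK; apply: open_closedC.
    have -> : ~` D = \bigcup_(d in D) ([set y | fs y d] `&` ~` [set d]).
      apply/seteqP; split => y.
        move=> Dy; have [[e De] fye] := trace_ne y gne.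
        exists e => //; split => //= ye; subst e; exact: Dy.
      move=> [d Dd [fyd nyd]] Dy; apply: nyd.
      exact: (trace_single gd Dy Dd fyd).
    apply: bigcup_open => d _; apply: openI; first exact: fsop.
    exact/closed_openC/accessible_closed_set1.
  + move=> d Dd; exists [set y | fs y d]; split.
    * exact: fsop.
    * by have [] := fsr d.
    * apply/seteqP; split => y.
        by move=> [fyd Dy]; exact: (trace_single gd Dy Dd fyd).
      by move=> /= ->; split => //; have [] := fsr d.
  + apply/seteqP; split => // y _.
    have [[e De] fye] := trace_ne y gne.
    exists e => //.
    by have [_ /(_ e fye)] := fsr y.
Qed.
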